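(* For any $p$-regular multigraph $G$ on $d$ vertices with $b$ edges and any $T\in\mathrm{Sym}^p(\mathbb{R}^n)$, $$\kappa^c_G(T)=\sum_{S\subseteq\mathrm{Frob}(G)}(-1)^{|S|}\,(n-b+p|S|)^{\underline{p|S|}}\,\kappa_{G\setminus S}(T),$$ where $G\setminus S$ is $G$ with the Frobenius pairs in $S$ removed.
   Context: $\mathrm{Sym}^p(\mathbb{R}^n)$: real symmetric $p$-ary tensors; $T_S$ is the entry indexed by a multiset. $(Q\cdot T)_{j}=\sum_{i\in[n]^p}T_i\prod_tQ_{i_t,j_t}$. $m^{\underline k}=m(m-1)\cdots(m-k+1)$. Multigraphs $G=(V,E)$ may have loops and parallel edges (loop contributes 2 to degree); $i(\partial v)$ is the multiset of labels at $v$ of $i\in[n]^E$ (loops twice). A Frobenius pair is a connected component consisting of two vertices joined by $p$ parallel edges; $\mathrm{Frob}(G)$ is the set of Frobenius-pair components of $G$. $m^!_G(T)=\sum_{i\in[n]^E\text{ injective}}\prod_vT_{i(\partial v)}$; with $U$ the vertices in Frobenius pairs and $i(\pi)$ the edge-label multiset of a pair $\pi$, $m^c_G(T)=\sum_{i\text{ injective}}\big[\prod_{v\notin U}T_{i(\partial v)}\prod_{\pi\in\mathrm{Frob}(G)}(T_{i(\pi)}^2-1)\big]$. $\kappa_G(T)=\mathbb{E}_Qm^!_G(Q\cdot T)$ and $\kappa^c_G(T)=\mathbb{E}_Qm^c_G(Q\cdot T)$, $Q$ Haar on $\mathcal{O}(n)$; $\kappa_\emptyset=\kappa^c_\emptyset=1$.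 *)

(* Defs.v *)
From HB Require Import structures.
From mathcomp Require Import all_boot all_order all_algebra.
From mathcomp Require Import all_classical all_reals all_analysis.
Set Implicit Arguments. Unset Strict Implicit. Unset Printing Implicit Defensive.
Import Order.TTheory GRing.Theory Num.Theory.
Import numFieldNormedType.Exports.
Local Open Scope ring_scope.

Definition mxB (R : realType) (n : nat) := g_sigma_algebraType (@open 'M[R]_n).

Definition orthogonal_mx (R : realType) (n : nat) (Q : 'M[R]_n) : bool :=
  Q *m Q^T == 1%:M.

Definition is_haar (R : realType) (n : nat) (mu : probability (mxB R n) R) : Prop :=
  mu [set Q : mxB R n | orthogonal_mx Q]%classic = 1%E /\
  (forall U : 'M[R]_n, orthogonal_mx U ->
     forall A : set (mxB R n), measurable A ->
       mu ((fun Q : mxB R n => (U *m Q : mxB R n)) @^-1` A)%classic = mu A).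

(* T s is the entry indexed by the multiset of elements of s;
   symmetric in its p indices, and zero on index lists of length <> p. *)
Definition sym_tensor (R : realType) (n p : nat) (T : seq 'I_n -> R) : Prop :=
  (forall s s' : seq 'I_n, perm_eq s s' -> T s = T s') /\
  (forall s : seq 'I_n, size s != p -> T s = 0).

Definition tact (R : realType) (n p : nat) (Q : 'M[R]_n) (T : seq 'I_n -> R)
  : seq 'I_n -> R :=
  fun j => if size j == p then
     \sum_(i : p.-tuple 'I_n) T i * \prod_(k <- zip i j) Q k.1 k.2
   else 0.

Definition ffact (R : realType) (x : R) (k : nat) : R :=
  \prod_(i < k) (x - i%:R).

(* A multigraph: finite vertex type V, finite edge type E, and endpoints
   ends e = (a, b); a loop has a = b.  Subgraphs are given by a vertex set
   Vs and an edge set Es (with the same incidence). *)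

Section Graph.
Variables (V E : finType) (ends : E -> V * V).

Definition inc (e : E) (v : V) : nat := ((ends e).1 == v) + ((ends e).2 == v).

Definition deg (v : V) : nat := \sum_(e : E) inc e v.

Definition regular (p : nat) : Prop := forall v : V, deg v = p.

(* Frobenius pair (vertex set A = {u, v}): a connected component made of two
   distinct vertices joined by p parallel edges. *)
Definition is_frob (p : nat) (A : {set V}) : bool :=
  [exists u : V, exists v : V,
    [&& u != v, A == [set u; v], (0 < p)%N,
        #|[set e : E | (ends e == (u, v)) || (ends e == (v, u))]| == p &
        [forall e : E, (((ends e).1 \in A) || ((ends e).2 \in A)) ==>
                        ((ends e == (u, v)) || (ends e == (v, u)))]]].

Definition frobs (p : nat) : {set {set V}} := [set A | is_frob p A].

Variables (n : nat).

Definition valid_lab (Es : {set E}) (lab : {ffun E -> option 'I_n}) : bool :=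
  [forall e, (e \in Es) == (lab e != None)] &&
  [forall e1, forall e2,
     [&& e1 \in Es, e2 \in Es & lab e1 == lab e2] ==> (e1 == e2)].

Definition vlab (lab : {ffun E -> option 'I_n}) (v : V) : seq 'I_n :=
  flatten [seq (if lab e is Some x then nseq (inc e v) x else [::]) | e <- enum E].

Definition plab (lab : {ffun E -> option 'I_n}) (A : {set V}) : seq 'I_n :=
  flatten [seq (if lab e is Some x then [:: x] else [::])
          | e <- enum E & ((ends e).1 \in A) || ((ends e).2 \in A)].

Variable (R : realType).

Definition minj (Vs : {set V}) (Es : {set E}) (T : seq 'I_n -> R) : R :=
  \sum_(lab : {ffun E -> option 'I_n} | valid_lab Es lab)
     \prod_(v in Vs) T (vlab lab v).

Definition mc (p : nat) (T : seq 'I_n -> R) : R :=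
  \sum_(lab : {ffun E -> option 'I_n} | valid_lab [set: E]%SET lab)
    ((\prod_(v in ~: finset.cover (frobs p)) T (vlab lab v)) *
     \prod_(A in frobs p) (T (plab lab A) ^+ 2 - 1)).

Definition rmV (S : {set {set V}}) : {set V} := ~: finset.cover S.
Definition rmE (S : {set {set V}}) : {set E} :=
  [set e : E | ((ends e).1 \notin finset.cover S) && ((ends e).2 \notin finset.cover S)].

Variable (mu : probability (mxB R n) R).

Definition kappa (p : nat) (Vs : {set V}) (Es : {set E}) (T : seq 'I_n -> R) : R :=
  Rintegral mu setT (fun Q : mxB R n => minj Vs Es (tact p Q T)).

Definition kappac (p : nat) (T : seq 'I_n -> R) : R :=
  Rintegral mu setT (fun Q : mxB R n => mc p (tact p Q T)).

End Graph.

(* Main.v *)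
Require Import Defs.
From HB Require Import structures.
From mathcomp Require Import all_boot all_order all_algebra.
From mathcomp Require Import all_classical all_reals all_analysis.
From mathcomp Require Import lra.
Import Order.TTheory GRing.Theory Num.Theory.
Import numFieldNormedType.Exports.
Local Open Scope ring_scope.

Section Ana.
Variables (R : realType) (n : nat).
Local Notation M := (mxB R n).

Lemma entry_meas (i j : 'I_n) : measurable_fun setT (fun Q : M => (Q : 'M[R]_n) i j).
Proof.
apply: (measurability _ (measurable_realfun.RGenOpens.measurableE R)).
move=> _ [_ [a [b ->]] <-]; apply: sub_sigma_algebra.
rewrite setTI.
have := @coord_continuous R n n i j.
move/continuousP => /(_ _ (@interval_open _ _ _ _ _)).
by apply.
Qed.
Lemma tact_meas (p : nat) (T : seq 'I_n -> R) (j : seq 'I_n) :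
  measurable_fun setT (fun Q : M => tact p (Q : 'M[R]_n) T j).
Proof.
rewrite /tact; case: (size j == p); last exact: measurable_cst.
apply: measurable_sum => i; apply: measurable_realfun.measurable_funM; first exact: measurable_cst.
by apply: measurable_prod => k _; apply: entry_meas.
Qed.

Lemma minj_meas (V E : finType) (ends : E -> V * V) p T Vs Es :
  measurable_fun setT (fun Q : M => minj ends Vs Es (tact p (Q : 'M[R]_n) T)).
Proof.
rewrite /minj.
have -> : (fun Q : M => \sum_(lab | valid_lab Es lab) \prod_(v in Vs) tact p (Q : 'M[R]_n) T (vlab ends lab v)) =
  (fun Q : M => \sum_lab (if valid_lab Es lab then \prod_v (if v \in Vs then tact p (Q : 'M[R]_n) T (vlab ends lab v) else 1) else 0)).
  by apply: funext => Q; rewrite big_mkcond /=; apply: eq_bigr => lab _; rewrite big_mkcond.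
apply: measurable_sum => lab; case: (valid_lab Es lab); last exact: measurable_cst.
apply: measurable_prod => v _; case: (v \in Vs); last exact: measurable_cst.
exact: tact_meas.
Qed.

Lemma mulmxT_meas (i j : 'I_n) :
  measurable_fun setT (fun Q : M => ((Q : 'M[R]_n) *m Q^T) i j).
Proof.
under eq_fun do rewrite mxE.
apply: measurable_sum => k; apply: measurable_realfun.measurable_funM; first exact: entry_meas.
under eq_fun do rewrite mxE. exact: entry_meas.
Qed.

Lemma O_meas : measurable [set Q : M | orthogonal_mx Q]%classic.
Proof.
have -> : [set Q : M | orthogonal_mx Q]%classic =
   (\bigcap_(ij in [set: 'I_n * 'I_n]) 
      ((fun Q : M => ((Q : 'M[R]_n) *m Q^T) ij.1 ij.2) @^-1` [set (1%:M : 'M[R]_n) ij.1 ij.2]))%classic.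
  apply/seteqP; split => Q /=.
    by move=> HQ [i j] _ /=; rewrite (eqP HQ).
  move=> H; apply/eqP/matrixP => i j; exact: (H (i, j)).
apply: fin_bigcap_measurable; first exact: finite_finset.
move=> [i j] _ /=; rewrite -[X in measurable X]setTI.
by apply: mulmxT_meas => //; exact: measurable_set1.
Qed.

Lemma orth_entry (Q : 'M[R]_n) (i j : 'I_n) : orthogonal_mx Q -> `|Q i j| <= 1.
Proof.
move=> /eqP HQ.
have h : Q i j ^+ 2 <= 1.
  have := congr1 (fun A : 'M[R]_n => A i i) HQ; rewrite !mxE eqxx /= mulr1n => <-.
  rewrite (bigD1 j) //= mxE -expr2 lerDl; apply: sumr_ge0 => k _.
  by rewrite mxE -expr2 sqr_ge0.
rewrite ler_norml; apply/andP; split; nra.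
Qed.

Lemma tact_bound (p : nat) (T : seq 'I_n -> R) (Q : 'M[R]_n) (j : seq 'I_n) :
  orthogonal_mx Q ->
  `|tact p Q T j| <= \sum_(i : p.-tuple 'I_n) `|T i|.
Proof.
move=> HQ; rewrite /tact; case: ifP => _; last first.
  by rewrite normr0; apply: sumr_ge0 => i _; exact: normr_ge0.
apply: (le_trans (ler_norm_sum _ _ _)); apply: ler_sum => i _.
rewrite normrM; rewrite -[X in _ <= X]mulr1; apply: ler_wpM2l => //.
rewrite normr_prod; apply: prodr_ile1 => k _.
by rewrite normr_ge0 orth_entry.
Qed.

Lemma minj_bound (V E : finType) (ends : E -> V * V) p T Vs Es (Q : 'M[R]_n) :
  orthogonal_mx Q ->
  `|minj ends Vs Es (tact p Q T)| <=
    \sum_(lab : {ffun E -> option 'I_n} | valid_lab Es lab)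
      \prod_(v in Vs) \sum_(i : p.-tuple 'I_n) `|T i|.
Proof.
move=> HQ; rewrite /minj.
apply: (le_trans (ler_norm_sum _ _ _)); apply: ler_sum => lab _.
rewrite normr_prod; apply: ler_prod => v _.
by rewrite normr_ge0 tact_bound.
Qed.

Lemma minj_int (V E : finType) (ends : E -> V * V) p T Vs Es
   (mu : probability M R) :
  mu [set Q : M | orthogonal_mx Q]%classic = 1%E ->
  mu.-integrable setT (EFin \o (fun Q : M => minj ends Vs Es (tact p (Q : 'M[R]_n) T))).
Proof.
move=> HO; apply/integrableP; split.
  by apply/measurable_realfun.measurable_EFinP; exact: minj_meas.
set C := \sum_(lab : {ffun E -> option 'I_n} | valid_lab Es lab)
      \prod_(v in Vs) \sum_(i : p.-tuple 'I_n) `|T i|.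
apply: (@le_lt_trans _ _ (C%:E * mu setT)%E).
  apply: integral_le_bound => //.
  - by apply/measurable_realfun.measurable_EFinP; exact: minj_meas.
  - rewrite lee_fin; apply: sumr_ge0 => lab _; apply: prodr_ge0 => v _.
    by apply: sumr_ge0 => i _.
  - exists (~` [set Q : M | orthogonal_mx Q])%classic; split.
    + by apply: measurableC; exact: O_meas.
    + by move: (probability_setC mu O_meas); rewrite HO subee.
    + move=> Q /= HQ; apply: contra_not HQ => HQ _.
      by rewrite /= lee_fin minj_bound.
by move: (probability_setT mu) => ->; rewrite mule1 ltry.
Qed.

Lemma Rint_sum (I : Type) (r : seq I) (P : pred I) (c : I -> R) (f : I -> M -> R)
   (mu : probability M R) :
  (forall i, mu.-integrable setT (EFin \o f i)) ->
  Rintegral mu setT (fun x => \sum_(i <- r | P i) c i * f i x) =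
  \sum_(i <- r | P i) c i * Rintegral mu setT (f i).
Proof.
move=> Hf; elim: r => [|i r IH].
  rewrite big_nil; under eq_Rintegral do rewrite big_nil.
  by rewrite /Rintegral integral0.
rewrite big_cons; under eq_Rintegral do rewrite big_cons.
case: (P i) => //.
have Hs : mu.-integrable setT (EFin \o (fun x => \sum_(j <- r | P j) c j * f j x)).
  have -> : EFin \o (fun x => \sum_(j <- r | P j) c j * f j x) =
     (fun x => \sum_(j <- r | P j) (c j)%:E * (EFin \o f j) x)%E.
    by apply: funext => x /=; rewrite -sumEFin; apply: eq_bigr => j _; rewrite EFinM.
  apply: integrable_sum => // j _; exact: integrableZl.
have Hi : mu.-integrable setT (EFin \o (fun x => c i * f i x)).
  have -> : EFin \o (fun x => c i * f i x) = (fun x => (c i)%:E * (EFin \o f i) x)%E.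
    by apply: funext => x /=; rewrite EFinM.
  by apply: integrableZl.
rewrite (RintegralD _ Hi Hs) // IH RintegralZl //.
Qed.
End Ana.


Set Implicit Arguments. Unset Strict Implicit.

Lemma prod_expand (R : comRingType) (I : finType) (F : {set I}) (x : I -> R) :
 \prod_(A in F) (x A - 1) =
 \sum_(S : {set I} | S \subset F) (-1) ^+ #|S| * \prod_(A in F :\: S) x A.
Proof.
rewrite big_mkcond /=.
transitivity (\prod_A ((if A \in F then -1 else 0) + (if A \in F then x A else 1))).
  by apply: eq_bigr => A _; case: (A \in F); rewrite ?add0r // addrC.
rewrite bigA_distr [RHS]big_mkcond /=; apply: eq_bigr => J _.
case: (boolP (J \subset F)) => JF; last first.
  case/subsetPn: JF => A AJ AF.
  by rewrite (bigD1 A) //= AJ (negbTE AF) mul0r.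
rewrite (bigID (fun A => A \in J)) /=; congr (_ * _).
  rewrite (eq_bigr (fun _ => -1)); first by rewrite prodr_const.
  by move=> A AJ; rewrite AJ (fintype.subsetP JF).
rewrite [RHS]big_mkcond /= [LHS]big_mkcond /=; apply: eq_bigr => A _.
by rewrite finset.in_setD; case: (A \in J); case: (A \in F).
Qed.

Section Comb.
Variables (V E : finType) (ends : E -> V * V) (p : nat).

Definition touches (A : {set V}) (e : E) : bool :=
  ((ends e).1 \in A) || ((ends e).2 \in A).

Local Notation F := (frobs ends p).

Lemma frobP A : A \in F -> exists u v, [/\ u != v, A = [set u; v], (0 < p)%N,
   #|[set e | touches A e]| = p &
   forall e, touches A e = ((ends e == (u, v)) || (ends e == (v, u)))].
Proof.
rewrite inE => /existsP [u /existsP [v /and5P [uv /eqP HA p0 /eqP Hc /forallP Hf]]].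
exists u, v; split => //.
  rewrite -Hc; apply: eq_card => e; rewrite !inE.
  apply/idP/idP; first by move/(implyP (Hf e)).
  by rewrite /touches; case/orP => /eqP ->; rewrite HA /= !inE eqxx ?orbT.
move=> e; apply/idP/idP; first by move/(implyP (Hf e)).
by rewrite /touches; case/orP => /eqP ->; rewrite HA /= !inE eqxx ?orbT.
Qed.

Lemma frob_touch A e : A \in F -> touches A e ->
  A = [set (ends e).1; (ends e).2].
Proof.
case/frobP => u [v [uv -> _ _ Ht]]; rewrite Ht.
by case/orP => /eqP -> //=; rewrite finset.setUC.
Qed.

Lemma frob_edge A : A \in F -> exists e, touches A e.
Proof.
case/frobP => u [v [_ _ p0 Hc _]].
have : (0 < #|[set e | touches A e]|)%N by rewrite Hc.
by case/card_gt0P => e; rewrite inE; exists e.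
Qed.

Lemma frob_eq A A' e : A \in F -> A' \in F -> touches A e -> touches A' e -> A = A'.
Proof. by move=> HA HA' t t'; rewrite (frob_touch HA t) (frob_touch HA' t'). Qed.

Lemma frob_triv : finset.trivIset F.
Proof.
apply/finset.trivIsetP => A A' HA HA' neq; apply/pred0P => w /=.
apply/negbTE/negP => /andP [wA wA'].
case: (frob_edge HA) => e te.
have t' : touches A' e.
  have := frob_touch HA te => EA; move: wA; rewrite EA !inE.
  by rewrite /touches; case/orP => /eqP <-; rewrite wA' ?orbT.
by move/eqP: neq; apply; apply: (frob_eq HA HA' te t').
Qed.


Lemma flatten_filter (T U : Type) (s : seq T) (P : pred T) (f g : T -> seq U) :
  (forall x, P x -> f x = g x) -> (forall x, ~~ P x -> g x = [::]) ->
  flatten [seq f x | x <- s & P x] = flatten [seq g x | x <- s].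
Proof.
move=> Hfg Hg; elim: s => [//|x s IH] /=.
case: (boolP (P x)) => Px /=; first by rewrite Hfg // IH.
by rewrite Hg.
Qed.

Variable n : nat.

Lemma plab_vlab (lab : {ffun E -> option 'I_n}) A w : A \in F -> w \in A ->
  plab ends lab A = vlab ends lab w.
Proof.
move=> HA wA; case: (frobP HA) => u [v [uv EA _ _ Ht]].
rewrite /plab /vlab; apply: flatten_filter => e.
  rewrite -/(touches A e) Ht => He.
  have -> : inc ends e w = 1%N.
    move: wA; rewrite EA !inE /inc.
    by case/orP: He => /eqP -> /= /orP [] /eqP ->; rewrite ?eqxx // ?(negbTE uv) // eq_sym (negbTE uv).
  by case: (lab e).
rewrite -/(touches A e) /touches negb_or => /andP [h1 h2].
have -> : inc ends e w = 0%N.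
  rewrite /inc; case: eqP => [E1|]; first by move: h1; rewrite E1 wA.
  by case: eqP => [E2|] //; move: h2; rewrite E2 wA.
by case: (lab e).
Qed.


Definition restr (Es : {set E}) (lab : {ffun E -> option 'I_n}) : {ffun E -> option 'I_n} :=
  [ffun e => if e \in Es then lab e else None].

Lemma touch_cover (S : {set {set V}}) e : S \subset F ->
  ((ends e).1 \in finset.cover S) || ((ends e).2 \in finset.cover S) ->
  exists2 A, A \in S & A = [set (ends e).1; (ends e).2].
Proof.
move=> SF H.
have [A AS tA] : exists2 A, A \in S & touches A e.
  case/orP: H => /finset.bigcupP [A AS wA]; exists A => //; by rewrite /touches wA ?orbT.
have HA : A \in F by move/fintype.subsetP: SF; apply.
exists A => //; exact: frob_touch HA tA.
Qed.

Lemma vlab_restr (S : {set {set V}}) (lab : {ffun E -> option 'I_n}) v : S \subset F -> v \notin finset.cover S ->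
  vlab ends (restr (rmE ends S) lab) v = vlab ends lab v.
Proof.
move=> SF vS; rewrite /vlab; congr flatten; apply: eq_map => e.
rewrite ffunE; case: ifP => // He.
have H : ((ends e).1 \in finset.cover S) || ((ends e).2 \in finset.cover S).
  by move: He; rewrite inE => /negbT; rewrite negb_and !negbK.
case: (touch_cover SF H) => A AS EA.
have H0 : inc ends e v = 0%N.
  rewrite /inc; case: eqP => [E1|_].
    by case/negP: vS; apply/finset.bigcupP; exists A => //; rewrite EA -E1 !inE eqxx.
  case: eqP => [E2|] //.
  by case/negP: vS; apply/finset.bigcupP; exists A => //; rewrite EA -E2 !inE eqxx ?orbT.
by rewrite H0; case: (lab e).
Qed.


Lemma frob_same A A' w : A \in F -> A' \in F -> w \in A -> w \in A' -> A = A'.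
Proof.
move=> HA HA' wA wA'; apply/eqP; apply/negPn/negP => neq.
move: frob_triv => /finset.trivIsetP /(_ A A' HA HA' neq).
by move/pred0P/(_ w) => /=; rewrite wA wA'.
Qed.

Lemma cover_split (S : {set {set V}}) w : S \subset F ->
  (w \in finset.cover (F :\: S)) = (w \notin finset.cover S) && (w \in finset.cover F).
Proof.
move=> SF; apply/idP/idP.
  case/finset.bigcupP => A; rewrite inE => /andP [AS AF] wA.
  apply/andP; split; last by apply/finset.bigcupP; exists A.
  apply/negP => /finset.bigcupP [A' A'S wA'].
  have A'F : A' \in F by move/fintype.subsetP: SF; apply.
  by move: AS; rewrite (frob_same AF A'F wA wA') A'S.
case/andP => wS /finset.bigcupP [A AF wA]; apply/finset.bigcupP; exists A => //.
rewrite inE AF andbT; apply/negP => AS; case/negP: wS.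
by apply/finset.bigcupP; exists A.
Qed.

Lemma prod_frob (R : realType) (S : {set {set V}}) (lab : {ffun E -> option 'I_n})
   (T : seq 'I_n -> R) : S \subset F ->
  (\prod_(v in ~: finset.cover F) T (vlab ends lab v)) *
  (\prod_(A in F :\: S) T (plab ends lab A) ^+ 2) =
  \prod_(v in ~: finset.cover S) T (vlab ends lab v).
Proof.
move=> SF.
have -> : \prod_(A in F :\: S) T (plab ends lab A) ^+ 2 =
   \prod_(A in F :\: S) \prod_(w in A) T (vlab ends lab w).
  apply: eq_bigr => A; rewrite inE => /andP [_ AF].
  case: (frobP AF) => u [v [uv EA _ _ _]].
  have uA : u \in A by rewrite EA !inE eqxx.
  have vA : v \in A by rewrite EA !inE eqxx orbT.
  rewrite expr2 {1}(plab_vlab lab AF uA) (plab_vlab lab AF vA).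
  by rewrite EA big_setU1 /= ?inE ?(negbTE uv) // big_set1.
rewrite -(finset.big_trivIset _ (trivIsetS (subsetDl F S) frob_triv)).
rewrite [RHS](bigID (fun w => w \in finset.cover F)) /= mulrC.
congr (_ * _); apply: eq_bigl => w; rewrite ?inE.
  by rewrite cover_split.
apply/idP/idP; first by move=> H; rewrite H andbT; apply/negP => /finset.bigcupP [A AS wA]; case/negP: H; apply/finset.bigcupP; exists A => //; move/fintype.subsetP: SF; apply.
by case/andP.
Qed.


Local Notation L := {ffun E -> option 'I_n}.

Lemma validP (Es : {set E}) (lab : L) : reflect
  ((forall e, (e \in Es) = (lab e != None)) /\
   (forall e1 e2, e1 \in Es -> e2 \in Es -> lab e1 = lab e2 -> e1 = e2))
  (valid_lab Es lab).
Proof.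
apply: (iffP andP) => [[/forallP H1 /forallP H2]|[H1 H2]]; split.
- by move=> e; apply/eqP; exact: H1.
- move=> e1 e2 h1 h2 h; apply/eqP; have := H2 e1 => /forallP /(_ e2) /implyP; apply.
  by rewrite h1 h2 h eqxx.
- by apply/forallP => e; rewrite H1.
apply/forallP => e1; apply/forallP => e2; apply/implyP => /and3P [h1 h2 /eqP h].
by rewrite (H2 _ _ h1 h2 h).
Qed.

Definition used (Es : {set E}) (lab : L) : {set 'I_n} :=
  [set x | [exists e in Es, lab e == Some x]].

Lemma card_used Es lab : valid_lab Es lab -> #|used Es lab| = #|Es|.
Proof.
case/validP => H1 H2.
have -> : #|Es| = #|[set lab e | e in Es]|.
  by rewrite card_in_imset // => e1 e2 h1 h2 h; apply: H2.
have -> : [set lab e | e in Es] = [set Some x | x in used Es lab].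
  apply/setP => y; apply/imsetP/imsetP => [[e eEs ->]|[x]].
    move: (eEs); rewrite H1; case E1: (lab e) => [x|] // _.
    exists x => //; rewrite inE; apply/existsP; exists e; rewrite eEs E1 eqxx.
    by [].
  rewrite inE => /existsP [e /andP [eEs /eqP He]] ->.
  by exists e.
by rewrite card_imset //; move=> x y [].
Qed.


Definition ext (Es D : {set E}) (lab' : L) : {set L} :=
  [set lab : L | valid_lab (Es :|: D) lab && [forall e in Es, lab e == lab' e]].

Definition upd (lab' : L) (e : E) (x : 'I_n) : L :=
  [ffun f => if f == e then Some x else lab' f].

Lemma ext0 Es lab' : valid_lab Es lab' -> ext Es finset.set0 lab' = [set lab'].
Proof.
move=> Hv; apply/setP => lab; rewrite !inE finset.setU0.
apply/andP/eqP => [[Hl /forallP Ha]|->]; last first.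
  by split => //; apply/forallP => e; apply/implyP.
case/validP: Hv => H1 _; case/validP: Hl => H1' _.
apply/ffunP => e; case: (boolP (e \in Es)) => He.
  by apply/eqP; exact: (implyP (Ha e) He).
move: (He); rewrite H1 negbK => /eqP ->.
by move: He; rewrite H1' negbK => /eqP.
Qed.

Lemma card_ext k : forall (D Es : {set E}) (lab' : L), #|D| = k ->
  [disjoint Es & D] -> valid_lab Es lab' ->
  #|ext Es D lab'| = (n - #|Es|) ^_ k.
Proof.
elim: k => [|k IH] D Es lab' HD dis Hv.
  move/eqP: HD; rewrite cards_eq0 => /eqP ->.
  by rewrite ext0 // cards1 ffactn0.
have [e eD] : exists e, e \in D by apply/card_gt0P; rewrite HD.
have eEs : e \notin Es.
  by apply/negP => h; move/pred0P: dis => /(_ e) /=; rewrite h eD.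
set D' := D :\ e; set Es' := e |: Es.
have HD' : #|D'| = k by move: HD; rewrite (cardsD1 e D) eD => [[]].
have dis' : [disjoint Es' & D'].
  apply/pred0P => f /=; rewrite !inE.
  case: (boolP (f == e)) => //= fe.
  by move/pred0P: dis => /(_ f).
have EU : Es' :|: D' = Es :|: D.
  apply/setP => f; rewrite !inE; case: (boolP (f == e)) => [/eqP ->|] /=.
    by rewrite eD orbT.
  by [].
case/validP: (Hv) => H1 H2.
have Hvx : forall x, x \notin used Es lab' -> valid_lab Es' (upd lab' e x).
  move=> x xU; apply/validP; split.
    by move=> f; rewrite !inE ffunE; case: (f == e) => //=; rewrite H1.
  move=> e1 e2; rewrite !inE !ffunE.
  have aux : forall f, f \in Es -> Some x = lab' f -> False.
    move=> f fEs h; case/negP: xU; rewrite inE; apply/existsP; exists f.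
    by rewrite fEs h eqxx.
  case: (boolP (e1 == e)) => [/eqP ->|e1e]; case: (boolP (e2 == e)) => [/eqP ->|e2e] //=.
  - by move=> _ h2 h; case: (aux _ h2 h).
  - by move=> h1 _ h; case: (aux _ h1 (esym h)).
  - exact: H2.
have key : forall lab : L,
    (lab \in ext Es D lab' : nat) =
    \sum_(x in ~: used Es lab') (lab \in ext Es' D' (upd lab' e x) : nat).
  move=> lab.
  have BtoA : forall x, lab \in ext Es' D' (upd lab' e x) ->
      (lab \in ext Es D lab') /\ lab e = Some x.
    move=> x; rewrite !inE EU => /andP [Hl /forallP Ha]; split.
      rewrite Hl /=; apply/forallP => f; apply/implyP => fEs.
      have := implyP (Ha f); rewrite !inE fEs orbT ffunE => /(_ isT).
      case: (f =P e) => // fe; by move: eEs; rewrite -fe fEs.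
    have := implyP (Ha e); rewrite !inE eqxx ffunE eqxx => /(_ isT) /eqP //.
  case: (boolP (lab \in ext Es D lab')) => HA; last first.
    rewrite big1 // => x _; case: (boolP (lab \in _)) => // h.
    by case: (BtoA x h) => h'; move: HA; rewrite h'.
  move: (HA); rewrite inE => /andP [Hl /forallP Ha].
  case/validP: (Hl) => H1l H2l.
  have : lab e != None by rewrite -H1l inE eD orbT.
  case Ex0: (lab e) => [x0|] // _.
  have x0U : x0 \in ~: used Es lab'.
    rewrite !inE; apply/negP => /existsP [f /andP [fEs /eqP hf]].
    have hf' : lab f = lab e.
      by rewrite Ex0 -hf; apply/eqP; exact: (implyP (Ha f) fEs).
    have := H2l f e; rewrite !inE fEs eD orbT => /(_ isT isT hf') fe.
    by move: eEs; rewrite -fe fEs.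
  rewrite (bigD1 x0) //= big1 ?addn0.
    have -> : lab \in ext Es' D' (upd lab' e x0) => //.
    rewrite inE EU Hl /=; apply/forallP => f; apply/implyP; rewrite !inE ffunE.
    case: (boolP (f == e)) => [/eqP ->|fe] /=; first by rewrite Ex0.
    by move=> fEs; exact: (implyP (Ha f) fEs).
  move=> x /andP [_ xx0]; case: (boolP (lab \in _)) => // h.
  case: (BtoA x h) => _; rewrite Ex0 => [[]] xe.
  by move: xx0; rewrite xe eqxx.
rewrite -sum1_card big_mkcond /=.
transitivity (\sum_lab (lab \in ext Es D lab' : nat)).
  by apply: eq_bigr => lab _; case: (lab \in _).
under eq_bigr do rewrite key.
rewrite exchange_big /=.
under eq_bigr => x xU.
  rewrite (_ : \sum_lab (lab \in ext Es' D' (upd lab' e x) : nat) = (n - #|Es'|) ^_ k).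
    over.
  rewrite -(IH D' Es' (upd lab' e x) HD' dis' (Hvx x _)); last by move: xU; rewrite inE.
  by rewrite -sum1_card [RHS]big_mkcond /=; apply: eq_bigr => lab _; case: (lab \in _).
rewrite sum_nat_const.
have -> : #|~: used Es lab'| = (n - #|Es|)%N.
  have h := cardsC (used Es lab'); rewrite (card_used Hv) card_ord in h; by rewrite -[in RHS]h addKn.
have -> : #|Es'| = #|Es|.+1 by rewrite cardsU1 eEs.
by rewrite ffactnS subnS.
Qed.


Lemma valid_restr (Es : {set E}) (lab : L) : valid_lab [set: E]%SET lab -> valid_lab Es (restr Es lab).
Proof.
case/validP => H1 H2; apply/validP; split.
  move=> e; rewrite ffunE; case: ifP => // _; by rewrite -H1 inE.
move=> e1 e2 h1 h2; rewrite !ffunE h1 h2; apply: H2; by rewrite inE.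
Qed.

Lemma sum_restr (R : realType) (Es : {set E}) (H : L -> R) :
  \sum_(lab | valid_lab [set: E]%SET lab) H (restr Es lab) =
  \sum_(lab' | valid_lab Es lab') ((n - #|Es|) ^_ #|~: Es|)%:R * H lab'.
Proof.
rewrite (partition_big (restr Es) (valid_lab Es)); last exact: valid_restr.
apply: eq_bigr => lab' Hv.
transitivity (\sum_(lab | lab \in ext Es (~: Es) lab') H lab').
  apply: eq_big => lab; last by move=> /andP [_ /eqP ->].
  rewrite inE finset.setUCr; congr andb; apply/eqP/forallP => [<- e|Ha].
    by apply/implyP => eEs; rewrite ffunE eEs.
  apply/ffunP => e; rewrite ffunE; case: ifP => eEs; first by apply/eqP; exact: (implyP (Ha e) eEs).
  by case/validP: Hv => H1 _; move: eEs; rewrite H1 => /negbT; rewrite negbK => /eqP.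
rewrite sumr_const (card_ext (erefl _)) //; first by rewrite mulr_natl.
by apply/pred0P => e /=; rewrite inE andbN.
Qed.


Lemma ffact_nat (R : realType) (m k : nat) : ((m ^_ k)%:R : R) = ffact (m%:R : R) k.
Proof.
rewrite /ffact; elim: k => [|k IH]; first by rewrite ffactn0 big_ord0.
rewrite big_ord_recr /= -IH ffactnSr natrM.
case: (leqP k m) => km; first by rewrite natrB.
by rewrite ffact_small // !mul0r.
Qed.

Lemma inrmE (S : {set {set V}}) e :
  (e \in ~: rmE ends S) = [exists A in S, touches A e].
Proof.
rewrite !inE negb_and !negbK; apply/idP/existsP.
  by case/orP => /finset.bigcupP [A AS wA]; exists A; rewrite AS /touches wA ?orbT.
case=> A /andP [AS]; rewrite /touches; case/orP => wA; apply/orP; [left|right];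
  by apply/finset.bigcupP; exists A.
Qed.

Lemma card_rmE (S : {set {set V}}) : S \subset F -> #|~: rmE ends S| = (p * #|S|)%N.
Proof.
move=> SF.
have SF' : forall A, A \in S -> A \in F by move=> A AS; move/fintype.subsetP: SF; apply.
rewrite -sum1_card big_mkcond /=.
transitivity (\sum_e \sum_(A in S) (touches A e : nat)).
  apply: eq_bigr => e _; rewrite inrmE.
  case: existsP => [[A /andP [AS tA]]|nH].
    rewrite (bigD1 A) //= tA big1 // => A' /andP [A'S neq].
    case: (boolP (touches A' e)) => // tA'.
    by move: neq; rewrite (frob_eq (SF' _ A'S) (SF' _ AS) tA' tA) eqxx.
  rewrite big1 // => A AS; case: (boolP (touches A e)) => // tA.
  by case: nH; exists A; rewrite AS.
rewrite exchange_big /=.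
transitivity (\sum_(A in S) p).
  apply: eq_bigr => A AS; case: (frobP (SF' _ AS)) => u [v [_ _ _ Hc _]].
  by rewrite -Hc -sum1_card [RHS]big_mkcond /=; apply: eq_bigr => e _; rewrite inE; case: (touches A e).
by rewrite sum_nat_const mulnC.
Qed.


Lemma mc_expand (R : realType) (T : seq 'I_n -> R) :
  mc ends p T =
  \sum_(S : {set {set V}} | S \subset frobs ends p)
     (-1) ^+ #|S| * ffact (n%:R - #|E|%:R + (p * #|S|)%:R) (p * #|S|)
       * minj ends (rmV S) (rmE ends S) T.
Proof.
rewrite /mc.
under eq_bigr => lab _ do rewrite (prod_expand F (fun A => T (plab ends lab A) ^+ 2)) mulr_sumr.
rewrite exchange_big /=; apply: eq_bigr => S SF.
transitivity (\sum_(lab | valid_lab [set: E]%SET lab) (-1) ^+ #|S| *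
   \prod_(v in rmV S) T (vlab ends (restr (rmE ends S) lab) v)).
  apply: eq_bigr => lab _; rewrite mulrCA (prod_frob lab T SF); congr (_ * _).
  by apply: eq_bigr => v vS; rewrite vlab_restr //; move: vS; rewrite inE.
rewrite -mulr_sumr -mulrA; congr (_ * _).
rewrite (sum_restr _ (fun lab' => \prod_(v in rmV S) T (vlab ends lab' v))) /minj mulr_sumr.
apply: eq_bigr => lab' Hv; congr (_ * _).
have Hle : (#|rmE ends S| <= n)%N.
  by rewrite -(card_used Hv); apply: leq_trans (max_card _) _; rewrite card_ord.
have Hc := cardsC (rmE ends S).
rewrite card_rmE // in Hc *.
rewrite ffact_nat natrB // -Hc natrD.
by congr ffact; rewrite opprD addrA subrK.
Qed.

End Comb.

Theorem proposition4p19 (R : realType) (n p : nat) (V E : finType)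
  (ends : E -> V * V) (mu : probability (mxB R n) R) (T : seq 'I_n -> R) :
  regular ends p -> is_haar mu -> sym_tensor p T ->
  kappac ends mu p T =
  \sum_(S : {set {set V}} | S \subset frobs ends p)
     (-1) ^+ #|S| * ffact (n%:R - #|E|%:R + (p * #|S|)%:R) (p * #|S|)
       * kappa ends mu p (rmV S) (rmE ends S) T.
Proof.
move=> _ [HO _] _; rewrite /kappac.
under eq_Rintegral do rewrite mc_expand.
rewrite (@Rint_sum R n {set {set V}} _ _ (fun S : {set {set V}} => (-1) ^+ #|S| * ffact (n%:R - #|E|%:R + (p * #|S|)%:R) (p * #|S|))
   (fun (S : {set {set V}}) (Q : mxB R n) => minj ends (rmV S) (rmE ends S) (tact p (Q : 'M[R]_n) T))).
  by [].
move=> S; exact: minj_int.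
Qed.
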